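(* Fix a finite alphabet $\mathcal{X}$, integers $M_1\ge M_2\ge K\ge1$, reals $\alpha,\beta>0$, and let $\xi_N=\lceil\alpha N\rceil$, $\chi_N=\lceil\beta N\rceil$. For each $N$, let $\Phi_{\mathrm{FL},N}$ be the fixed-length test which observes $(\mathbf{X}^{\xi_N},\mathbf{Y}^{\chi_N})$ and decides $\mathrm{H}_l^K$ with $l=\arg\min_{t\in[T_K]}\mathrm{S}_t^K(\mathbf{X}^{\xi_N},\mathbf{Y}^{\chi_N})$. Then for every $l\in[T_K]$ and every $(P^{M_1},Q^{M_2})\in\mathcal{P}_l^K$, $$\liminf_{N\to\infty}\frac{-\log\beta(\Phi_{\mathrm{FL},N}|P^{M_1},Q^{M_2})}{N}\ge E_{\mathrm{f}}(l,K,P^{M_1},Q^{M_2}).$$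
   Context: Model: $\mathcal{P}(\mathcal{X})$ is the set of distributions on $\mathcal{X}$. For $i\in[M_1]$, $X_i^{\xi_N}=(X_{i,1},\dots,X_{i,\xi_N})$ is i.i.d. $P_i$; for $j\in[M_2]$, $Y_j^{\chi_N}$ is i.i.d. $Q_j$; all independent; within each database the distributions are distinct. A $K$-match is a set of $K$ pairs in $[M_1]\times[M_2]$ with no two pairs sharing a first or a second coordinate; there are $T_K=\binom{M_1}{K}\binom{M_2}{K}K!$ of them, $\mathcal{M}_1^K,\dots,\mathcal{M}_{T_K}^K$. $\mathcal{P}_l^K:=\{(\tilde P^{M_1},\tilde Q^{M_2}):\tilde P_i=\tilde Q_j\text{ iff }(i,j)\in\mathcal{M}_l^K\}$ (hypothesis $\mathrm{H}_l^K$). Mismatch probability $\beta(\Phi|P^{M_1},Q^{M_2})$ = probability, under $(P^{M_1},Q^{M_2})\in\mathcal{P}_l^K$, that the decision differs from $\mathrm{H}_l^K$. Notation: $\hat T_{x^n}$ is the empirical distribution (type) of $x^n$; $D$ is KL divergence; $R_{\alpha,\beta}^{P,Q}=\frac{\alpha P+\beta Q}{\alpha+\beta}$; $\mathrm{GJS}(P,Q,\alpha,\beta)=\alpha D(P\|R_{\alpha,\beta}^{P,Q})+\beta D(Q\|R_{\alpha,\beta}^{P,Q})$; $\mathrm{G}_t^K(P^{M_1},Q^{M_2},\alpha,\beta)=\sum_{(i,j)\in\mathcal{M}_t^K}\mathrm{GJS}(P_i,Q_j,\alpha,\beta)$; $\mathrm{S}_t^K(\mathbf{x}^{\xi_N},\mathbf{y}^{\chi_N})=\mathrm{G}_t^K((\hat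 T_{x_i^{\xi_N}})_i,(\hat T_{y_j^{\chi_N}})_j,\alpha,\beta)$. $E(P^{M_1},Q^{M_2},\Omega^{M_1},\Psi^{M_2},\alpha,\beta)=\sum_{i\in[M_1]}\alpha D(\Omega_i\|P_i)+\sum_{j\in[M_2]}\beta D(\Psi_j\|Q_j)$, and $E_{\mathrm{f}}(l,K,P^{M_1},Q^{M_2}):=\min_{t\in[T_K],t\ne l}\ \min_{(\Omega^{M_1},\Psi^{M_2})\in\mathcal{P}(\mathcal{X})^{M_1+M_2}:\ \mathrm{G}_t^K(\Omega^{M_1},\Psi^{M_2},\alpha,\beta)\le\mathrm{G}_l^K(\Omega^{M_1},\Psi^{M_2},\alpha,\beta)}E(P^{M_1},Q^{M_2},\Omega^{M_1},\Psi^{M_2},\alpha,\beta)$. *)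

(* Defs.v *)
From HB Require Import structures.
From mathcomp Require Import all_boot all_order all_algebra.
From mathcomp Require Import all_classical all_reals all_analysis.
Set Implicit Arguments. Unset Strict Implicit. Unset Printing Implicit Defensive.
Import Order.TTheory GRing.Theory Num.Theory.
Local Open Scope ring_scope.

Section Defs.
Variables (R : realType) (X : finType).

Definition is_dist (p : {ffun X -> R}) : Prop :=
  (forall a, 0 <= p a) /\ \sum_(a : X) p a = 1.

Definition emp_type n (x : {ffun 'I_n -> X}) : {ffun X -> R} :=
  [ffun a => #|[set k | x k == a]|%:R / n%:R].

Definition KL (p q : {ffun X -> R}) : \bar R :=
  (\sum_(a : X)
     (if p a == 0%R then 0%E
      else if q a == 0%R then +oo%E
      else (p a * ln (p a / q a))%:E))%E.

Definition mixR (p q : {ffun X -> R}) (al be : R) : {ffun X -> R} :=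
  [ffun a => (al * p a + be * q a) / (al + be)].

Definition GJS (p q : {ffun X -> R}) (al be : R) : \bar R :=
  (al%:E * KL p (mixR p q al be) + be%:E * KL q (mixR p q al be))%E.

Variables (M1 M2 : nat).

Definition is_match (K : nat) (m : {set 'I_M1 * 'I_M2}) : Prop :=
  #|m| = K /\ {in m &, injective (fun ij : 'I_M1 * 'I_M2 => ij.1)}
           /\ {in m &, injective (fun ij : 'I_M1 * 'I_M2 => ij.2)}.

Definition Gm (m : {set 'I_M1 * 'I_M2})
  (Ps : 'I_M1 -> {ffun X -> R}) (Qs : 'I_M2 -> {ffun X -> R}) (al be : R)
  : \bar R :=
  (\sum_(ij in m) GJS (Ps ij.1) (Qs ij.2) al be)%E.

Definition in_hyp (m : {set 'I_M1 * 'I_M2})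
  (Ps : 'I_M1 -> {ffun X -> R}) (Qs : 'I_M2 -> {ffun X -> R}) : Prop :=
  forall i j, Ps i = Qs j <-> (i, j) \in m.

Definition Sm n1 n2 (m : {set 'I_M1 * 'I_M2})
  (x : {ffun 'I_M1 -> {ffun 'I_n1 -> X}}) (y : {ffun 'I_M2 -> {ffun 'I_n2 -> X}})
  (al be : R) : \bar R :=
  Gm m (fun i => emp_type (x i)) (fun j => emp_type (y j)) al be.

Definition db_prob M n (Ps : 'I_M -> {ffun X -> R})
  (x : {ffun 'I_M -> {ffun 'I_n -> X}}) : R :=
  \prod_(i < M) \prod_(k < n) Ps i (x i k).

Definition Eexp (Ps : 'I_M1 -> {ffun X -> R}) (Qs : 'I_M2 -> {ffun X -> R})
  (Om : 'I_M1 -> {ffun X -> R}) (Psi : 'I_M2 -> {ffun X -> R}) (al be : R)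
  : \bar R :=
  (\sum_(i < M1) al%:E * KL (Om i) (Ps i) + \sum_(j < M2) be%:E * KL (Psi j) (Qs j))%E.

(* E_f(l,K,P,Q); the min over t and over (Omega,Psi) is written as an infimum *)
Definition Ef (K : nat) (ml : {set 'I_M1 * 'I_M2})
  (Ps : 'I_M1 -> {ffun X -> R}) (Qs : 'I_M2 -> {ffun X -> R}) (al be : R)
  : \bar R :=
  ereal_inf [set e | exists t Om Psi,
    is_match K t /\ t != ml /\
    (forall i, is_dist (Om i)) /\ (forall j, is_dist (Psi j)) /\
    (Gm t Om Psi al be <= Gm ml Om Psi al be)%E /\
    e = Eexp Ps Qs Om Psi al be].

Definition ssize (a : R) (N : nat) : nat := `|Num.ceil (a * N%:R)|%N.

Definition FLtest (al be : R) :=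
  forall N : nat, {ffun 'I_M1 -> {ffun 'I_(ssize al N) -> X}} ->
    {ffun 'I_M2 -> {ffun 'I_(ssize be N) -> X}} -> {set 'I_M1 * 'I_M2}.

(* Phi_FL,N: the decision is a K-match minimizing S_t^K (any tie-breaking) *)
Definition is_min_S_test (K : nat) (al be : R) (phi : FLtest al be) : Prop :=
  forall N x y, is_match K (phi N x y) /\
    forall t, is_match K t -> (Sm (phi N x y) x y al be <= Sm t x y al be)%E.

Definition mismatch (al be : R) (phi : FLtest al be) (ml : {set 'I_M1 * 'I_M2})
  (Ps : 'I_M1 -> {ffun X -> R}) (Qs : 'I_M2 -> {ffun X -> R}) (N : nat) : R :=
  \sum_(x : {ffun 'I_M1 -> {ffun 'I_(ssize al N) -> X}})
   \sum_(y : {ffun 'I_M2 -> {ffun 'I_(ssize be N) -> X}})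
     (if phi N x y != ml then db_prob Ps x * db_prob Qs y else 0).

Definition err_exponent (b : nat -> R) (N : nat) : \bar R :=
  if b N == 0%R then +oo%E else (- ln (b N) / N%:R)%:E.

End Defs.

(* Main.v *)
Require Import Defs.
From HB Require Import structures.
From mathcomp Require Import all_boot all_order all_algebra.
From mathcomp Require Import all_classical all_reals all_analysis.
From mathcomp Require Import ring lra.
From Stdlib Require Classical.
Import Order.TTheory GRing.Theory Num.Theory.
Local Open Scope ring_scope.

Section Aux.
Set Implicit Arguments. Unset Strict Implicit.
Variables (R : realType) (X : finType).

Lemma prod_cnt n (x : {ffun 'I_n -> X}) (f : X -> R) :
  \prod_(k < n) f (x k) = \prod_a f a ^+ #|[set k | x k == a]|.
Proof.
rewrite (partition_big x predT) //=; apply: eq_bigr => a _.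
rewrite (eq_bigr (fun=> f a)); last by move=> k /eqP->.
by rewrite -prodr_const; apply: eq_bigl => k; rewrite inE.
Qed.

Lemma sum_cnt n (x : {ffun 'I_n -> X}) (f : X -> R) :
  \sum_(k < n) f (x k) = \sum_a f a *+ #|[set k | x k == a]|.
Proof.
rewrite (partition_big x predT) //=; apply: eq_bigr => a _.
rewrite (eq_bigr (fun=> f a)); last by move=> k /eqP->.
by rewrite -sumr_const; apply: eq_bigl => k; rewrite inE.
Qed.

Lemma emp_ge0 n (x : {ffun 'I_n -> X}) a : 0 <= emp_type R x a.
Proof. by rewrite ffunE divr_ge0. Qed.

Lemma emp_sum n (x : {ffun 'I_n -> X}) :
  (0 < n)%N -> \sum_a emp_type R x a = 1.
Proof.
move=> n0.
rewrite (eq_bigr (fun a => (1 : R) *+ #|[set k | x k == a]| / n%:R)); last first.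
  by move=> a _; rewrite ffunE.
rewrite -mulr_suml -(sum_cnt x (fun=> 1)) sumr_const card_ord.
by rewrite divff // pnatr_eq0 -lt0n.
Qed.

Lemma emp_sum_le1 n (x : {ffun 'I_n -> X}) : \sum_a emp_type R x a <= 1.
Proof.
case: n x => [|n] x; last by rewrite emp_sum.
rewrite big1 // => a _; by rewrite ffunE invr0 mulr0.
Qed.

Lemma emp_dist n (x : {ffun 'I_n -> X}) : (0 < n)%N -> is_dist (emp_type R x).
Proof. by move=> n0; split; [exact: emp_ge0| exact: emp_sum]. Qed.

Definition kl (p q : {ffun X -> R}) : R :=
  \sum_a (if p a == 0 then 0 else p a * ln (p a / q a)).

Definition supp_ok (p q : {ffun X -> R}) := forall a, p a != 0 -> q a != 0.

Lemma KL_fin p q : supp_ok p q -> KL p q = (kl p q)%:E.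
Proof.
move=> h; rewrite /KL /kl -sumEFin; apply: eq_bigr => a _.
case: eqP => // /eqP pa; by rewrite (negbTE (h a pa)).
Qed.

Lemma ln_le_sub1 (y : R) : 0 < y -> ln y <= y - 1.
Proof.
move=> y0; have := @le_ln1Dx R (y - 1); rewrite (addrC 1) subrK; apply.
by rewrite ltrBrDl subrr.
Qed.

Lemma kl_ge0 p q : is_dist p -> is_dist q -> supp_ok p q -> 0 <= kl p q.
Proof.
move=> [p0 p1] [q0 q1] h.
apply: le_trans (_ : \sum_a (p a - q a) <= _).
  by rewrite sumrB p1 q1 subrr.
apply: ler_sum => a _; case: eqP => [->|/eqP pa].
  by rewrite sub0r oppr_le0.
have qa : q a != 0 by apply: h.
have pp : 0 < p a by rewrite lt0r pa p0.
have qp : 0 < q a by rewrite lt0r qa q0.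
have : ln (q a / p a) <= q a / p a - 1 by apply: ln_le_sub1; rewrite divr_gt0.
rewrite -[p a / q a]invf_div lnV ?posrE ?divr_gt0 // => hl.
have := ler_wpM2l (ltW pp) hl.
rewrite mulrBr mulr1 mulrCA divff ?mulr1 // => hh.
by rewrite mulrN lerNr opprB.
Qed.

Lemma seq_prob n (x : {ffun 'I_n -> X}) (P : {ffun X -> R}) : (0 < n)%N ->
  (forall a, 0 <= P a) -> supp_ok (emp_type R x) P ->
  \prod_k P (x k) = \prod_k emp_type R x (x k) * expR (- (n%:R * kl (emp_type R x) P)).
Proof.
move=> n0 P0 h; rewrite !prod_cnt /kl mulr_sumr -sumrN expR_sum -big_split /=.
apply: eq_bigr => a _.
set c := #|[set k | x k == a]|.
have nn : (n%:R : R) != 0 by rewrite pnatr_eq0 -lt0n.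
have Te : emp_type R x a = c%:R / n%:R by rewrite ffunE.
case: (posnP c) => [c0|cp].
  by rewrite Te c0 !expr0 mul0r eqxx mulr0 oppr0 expR0 mulr1.
have Tn : emp_type R x a != 0 by rewrite Te mulf_neq0 ?invr_eq0 // pnatr_eq0 -lt0n.
have Pn : P a != 0 by apply: h.
have Pp : 0 < P a by rewrite lt0r Pn P0.
have Tp : 0 < emp_type R x a by rewrite lt0r Tn emp_ge0.
rewrite (negbTE Tn).
have -> : n%:R * (emp_type R x a * ln (emp_type R x a / P a)) =
          c%:R * ln (emp_type R x a / P a).
  by rewrite Te mulrA mulrCA divff // mulr1.
rewrite expRN expRM_natl lnK ?posrE ?divr_gt0 //.
by rewrite -exprVn invf_div -exprMn mulrC divfK.
Qed.


Lemma emp_eq n (x x0 : {ffun 'I_n -> X}) :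
  (forall a, #|[set k | x k == a]| = #|[set k | x0 k == a]|) ->
  emp_type R x = emp_type R x0.
Proof. by move=> h; apply/ffunP => a; rewrite !ffunE h. Qed.

Lemma sum_own n :
  \sum_(x : {ffun 'I_n -> X}) \prod_k emp_type R x (x k) <= (n.+1 ^ #|X|)%:R.
Proof.
pose cnt := fun x : {ffun 'I_n -> X} =>
  [ffun a => (inord #|[set k | x k == a]| : 'I_n.+1)].
have cntE x a : nat_of_ord (cnt x a) = #|[set k | x k == a]|.
  rewrite /cnt ffunE inordK // ltnS; apply: leq_trans (max_card _) _.
  by rewrite card_ord.
rewrite (partition_big cnt predT) //=.
apply: le_trans (_ : \sum_(c : {ffun X -> 'I_n.+1}) (1 : R) <= _); last first.
  by rewrite sumr_const card_ffun card_ord.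
apply: ler_sum => c _.
case: (pickP (fun x => cnt x == c)) => [x0 hx0 | none]; last first.
  by rewrite big_pred0 // => x; rewrite none.
rewrite (eq_bigr (fun x : {ffun 'I_n -> X} => \prod_k emp_type R x0 (x k))); last first.
  move=> x /eqP hx; rewrite (@emp_eq _ x x0) // => a.
  by rewrite -!cntE hx (eqP hx0).
apply: le_trans (_ : \sum_(x : {ffun 'I_n -> X}) \prod_k emp_type R x0 (x k) <= _).
  rewrite big_mkcond /=; apply: ler_sum => x _.
  case: ifP => _ //; apply: prodr_ge0 => k _; exact: emp_ge0.
rewrite -(bigA_distr_bigA (fun (k : 'I_n) a => emp_type R x0 a)) /=.
rewrite prodr_const card_ord; apply: exprn_ile1.
  by apply: sumr_ge0 => a _; exact: emp_ge0.
exact: emp_sum_le1.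
Qed.

Lemma sum_db M n :
  \sum_(x : {ffun 'I_M -> {ffun 'I_n -> X}})
     \prod_(i < M) \prod_k emp_type R (x i) (x i k) <= ((n.+1 ^ #|X|)%:R) ^+ M.
Proof.
rewrite -(bigA_distr_bigA (fun (i : 'I_M) (xi : {ffun 'I_n -> X}) =>
   \prod_k emp_type R xi (xi k))) /=.
rewrite -[in X in _ <= X](card_ord M) -prodr_const.
apply: ler_prod => i _; rewrite sum_own andbT.
apply: sumr_ge0 => xi _; apply: prodr_ge0 => k _; exact: emp_ge0.
Qed.


Lemma ssize_ge (a : R) N : 0 < a -> a * N%:R <= (ssize a N)%:R.
Proof.
move=> a0; rewrite /ssize natr_absz ger0_norm.
  exact: ceil_ge.
rewrite -(@ler_int R); apply: le_trans (ceil_ge _); by rewrite mulr_ge0 // ltW.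
Qed.

Lemma ssize_le (a : R) N : 0 < a -> (ssize a N)%:R < a * N%:R + 1.
Proof.
move=> a0; rewrite /ssize natr_absz ger0_norm.
  by rewrite -ltrBlDr -[1]/(1%:~R) -intrB ceilB1_lt.
rewrite -(@ler_int R); apply: le_trans (ceil_ge _); by rewrite mulr_ge0 // ltW.
Qed.

Lemma db_zero M n (Ps : 'I_M -> {ffun X -> R}) (x : {ffun 'I_M -> {ffun 'I_n -> X}}) i a :
  Ps i a = 0 -> emp_type R (x i) a != 0 -> db_prob Ps x = 0.
Proof.
move=> hP; rewrite ffunE mulf_eq0 negb_or => /andP[hc _].
have : (0 < #|[set k | x i k == a]|)%N by rewrite lt0n -(pnatr_eq0 R).
case/card_gt0P => k; rewrite inE => /eqP hk.
by rewrite /db_prob (bigD1 i) //= (bigD1 k) //= hk hP !mul0r.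
Qed.

Lemma db_fin M n (Ps : 'I_M -> {ffun X -> R}) (x : {ffun 'I_M -> {ffun 'I_n -> X}}) :
  (0 < n)%N -> (forall i a, 0 <= Ps i a) ->
  (forall i, supp_ok (emp_type R (x i)) (Ps i)) ->
  db_prob Ps x = (\prod_i \prod_k emp_type R (x i) (x i k)) *
     expR (- (n%:R * \sum_i kl (emp_type R (x i)) (Ps i))).
Proof.
move=> n0 P0 h; rewrite /db_prob (eq_bigr _ (fun i _ => seq_prob n0 (P0 i) (h i))).
by rewrite big_split /= -expR_sum mulr_sumr sumrN.
Qed.

End Aux.

Section Main.
Unset Implicit Arguments.
Variables (R : realType) (X : finType) (M1 M2 K : nat) (al be : R).
Hypotheses (hal : 0 < al) (hbe : 0 < be).
Variable (phi : FLtest X M1 M2 al be).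
Hypothesis (hphi : is_min_S_test K phi).
Variables (ml : {set 'I_M1 * 'I_M2}).
Hypothesis (hml : is_match K ml).
Variables (Ps : 'I_M1 -> {ffun X -> R}) (Qs : 'I_M2 -> {ffun X -> R}).
Hypotheses (hP : forall i, is_dist (Ps i)) (hQ : forall j, is_dist (Qs j)).
Set Implicit Arguments.

Lemma ssize_gt0 (a : R) N : 0 < a -> (0 < N)%N -> (0 < ssize a N)%N.
Proof.
move=> a0 N0; rewrite -(ltr0n R); apply: lt_le_trans (ssize_ge N a0).
by rewrite mulr_gt0 // ltr0n.
Qed.

Definition Wt {M n} (x : {ffun 'I_M -> {ffun 'I_n -> X}}) : R :=
  \prod_i \prod_k emp_type R (x i) (x i k).

Lemma Wt_ge0 M n (x : {ffun 'I_M -> {ffun 'I_n -> X}}) : 0 <= Wt x.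
Proof. by apply: prodr_ge0 => i _; apply: prodr_ge0 => k _; exact: emp_ge0. Qed.

Lemma pair_bound N r (x : {ffun 'I_M1 -> {ffun 'I_(ssize al N) -> X}})
  (y : {ffun 'I_M2 -> {ffun 'I_(ssize be N) -> X}}) :
  (0 < N)%N -> (r%:E <= Ef K ml Ps Qs al be)%E -> phi N x y != ml ->
  db_prob Ps x * db_prob Qs y <= Wt x * Wt y * expR (- (N%:R * r)).
Proof.
move=> N0 hr hbad.
have n1p := ssize_gt0 hal N0.
have n2p := ssize_gt0 hbe N0.
pose Om := fun i => emp_type R (x i).
pose Psi := fun j => emp_type R (y j).
have hE : (Ef K ml Ps Qs al be <= Eexp Ps Qs Om Psi al be)%E.
  apply: ereal_inf_lbound; exists (phi N x y), Om, Psi.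
  have [hm hmin] := hphi N x y.
  split; first exact: hm.
  split; first exact: hbad.
  split; first by move=> i; exact: emp_dist.
  split; first by move=> j; exact: emp_dist.
  by split; first exact: hmin.
have {hE}hr := le_trans hr hE.
have P0 i a : 0 <= Ps i a by case: (hP i).
have Q0 j a : 0 <= Qs j a by case: (hQ j).
have Wx := Wt_ge0 x; have Wy := Wt_ge0 y.
case: (Classical_Prop.classic ((forall i, supp_ok (Om i) (Ps i)) /\ (forall j, supp_ok (Psi j) (Qs j)))) => [[hi hj] | hn]; last first.
  have -> : db_prob Ps x * db_prob Qs y = 0.
    case: (Classical_Prop.not_and_or _ _ hn) => hn'.
      have [i hi] := Classical_Pred_Type.not_all_ex_not _ _ hn'.
      have [a ha] := Classical_Pred_Type.not_all_ex_not _ _ hi.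
      have [h1 h2] := Classical_Prop.imply_to_and _ _ ha.
      by rewrite (@db_zero _ _ _ _ Ps x i a) ?mul0r //; apply/eqP/negPn/negP.
    have [i hi] := Classical_Pred_Type.not_all_ex_not _ _ hn'.
    have [a ha] := Classical_Pred_Type.not_all_ex_not _ _ hi.
    have [h1 h2] := Classical_Prop.imply_to_and _ _ ha.
    by rewrite (@db_zero _ _ _ _ Qs y i a) ?mulr0 //; apply/eqP/negPn/negP.
  by rewrite !mulr_ge0 // expR_ge0.
have EE : Eexp Ps Qs Om Psi al be =
   (al * \sum_i kl (Om i) (Ps i) + be * \sum_j kl (Psi j) (Qs j))%:E.
  rewrite /Eexp (eq_bigr (fun i => (al * kl (Om i) (Ps i))%:E)); last first.
    by move=> i _; rewrite KL_fin.
  rewrite [X in (_ + X)%E](eq_bigr (fun j => (be * kl (Psi j) (Qs j))%:E)); last first.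
    by move=> j _; rewrite KL_fin.
  by rewrite !sumEFin -EFinD !mulr_sumr.
move: hr; rewrite EE lee_fin => hr.
rewrite (db_fin n1p P0 hi) (db_fin n2p Q0 hj) -/(Wt x) -/(Wt y).
rewrite mulrACA -expRD; apply: ler_wpM2l; first exact: mulr_ge0.
rewrite ler_expR.
set S1 := \sum_i _. set S2 := \sum_j _.
have S10 : 0 <= S1.
  apply: sumr_ge0 => i _; apply: kl_ge0 => //; [exact: (emp_dist R (x i) n1p) | exact: hi].
have S20 : 0 <= S2.
  apply: sumr_ge0 => j _; apply: kl_ge0 => //; [exact: (emp_dist R (y j) n2p) | exact: hj].
have h1 := ssize_ge N hal; have h2 := ssize_ge N hbe.
have N0' : 0 <= (N%:R : R) by [].
have a1 : al * N%:R * S1 <= (ssize al N)%:R * S1 by apply: ler_wpM2r.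
have a2 : be * N%:R * S2 <= (ssize be N)%:R * S2 by apply: ler_wpM2r.
have a3 : N%:R * r <= N%:R * (al * S1 + be * S2) by apply: ler_wpM2l.
rewrite lerNr opprD !opprK.
lra.
Qed.


Definition CN N : R :=
  ((ssize al N).+1 ^ #|X|)%:R ^+ M1 * ((ssize be N).+1 ^ #|X|)%:R ^+ M2.

Lemma mismatch_ge0 N : 0 <= mismatch phi ml Ps Qs N.
Proof.
have P0 i a : 0 <= Ps i a by case: (hP i).
have Q0 j a : 0 <= Qs j a by case: (hQ j).
apply: sumr_ge0 => x _; apply: sumr_ge0 => y _; case: ifP => // _.
by apply: mulr_ge0; apply: prodr_ge0 => i _; apply: prodr_ge0.
Qed.

Lemma beta_bound N r : (0 < N)%N -> (r%:E <= Ef K ml Ps Qs al be)%E ->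
  mismatch phi ml Ps Qs N <= expR (- (N%:R * r)) * CN N.
Proof.
move=> N0 hr; rewrite /mismatch.
apply: le_trans (_ : \sum_(x : {ffun 'I_M1 -> {ffun 'I_(ssize al N) -> X}})
   \sum_(y : {ffun 'I_M2 -> {ffun 'I_(ssize be N) -> X}})
    Wt x * Wt y * expR (- (N%:R * r)) <= _).
  apply: ler_sum => x _; apply: ler_sum => y _; case: ifP => h.
    exact: pair_bound.
  by rewrite !mulr_ge0 ?Wt_ge0 ?expR_ge0.
have -> : \sum_(x : {ffun 'I_M1 -> {ffun 'I_(ssize al N) -> X}})
   \sum_(y : {ffun 'I_M2 -> {ffun 'I_(ssize be N) -> X}})
    Wt x * Wt y * expR (- (N%:R * r)) =
   expR (- (N%:R * r)) * ((\sum_(x : {ffun 'I_M1 -> {ffun 'I_(ssize al N) -> X}}) Wt x) *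
     (\sum_(y : {ffun 'I_M2 -> {ffun 'I_(ssize be N) -> X}}) Wt y)).
  rewrite mulr_suml mulr_sumr; apply: eq_bigr => x _.
  rewrite mulr_sumr mulr_sumr; apply: eq_bigr => y _; ring.
apply: ler_wpM2l; first exact: expR_ge0.
apply: ler_pM.
- by apply: sumr_ge0 => x _; exact: Wt_ge0.
- by apply: sumr_ge0 => x _; exact: Wt_ge0.
- exact: sum_db.
- exact: sum_db.
Qed.

Lemma CN_exp (e : R) : 0 < e -> exists N0 : nat, forall N, (N0 <= N)%N -> (0 < N)%N ->
  CN N <= expR (e * N%:R).
Proof.
move=> e0.
pose A := (#|X| * M1 + #|X| * M2)%N.
pose D := al + be + 2.
have D0 : 0 < D by rewrite /D; apply: addr_gt0; [exact: addr_gt0 | by []].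
pose F : R := (A.+1)`!%:R.
have F0 : 0 < F by rewrite /F ltr0n fact_gt0.
pose B := D ^+ A * F / e ^+ A.+1.
exists (Num.trunc B).+1 => N hN N0.
have NB : B <= N%:R.
  apply/ltW/(lt_le_trans (truncnS_gt B)); by rewrite ler_nat.
have Nr : 1 <= (N%:R : R) by rewrite ler1n.
have step1 : CN N <= (D * N%:R) ^+ A.
  have hs (a : R) (a0 : 0 < a) (aD : a + 2 <= D) :
      ((ssize a N).+1%:R : R) <= D * N%:R.
    have := ssize_le N a0; rewrite -addn1 natrD => hl.
    have : a * N%:R + 2 <= D * N%:R.
      have : (a + 2) * N%:R <= D * N%:R by apply: ler_wpM2r.
      have : 2 <= 2 * (N%:R : R) by lra.
      rewrite mulrDl; lra.
    lra.
  rewrite /CN /A exprD !natrX -!exprM.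
  apply: ler_pM; rewrite ?exprn_ge0 ?ler0n //.
    apply: lerXn2r; rewrite ?nnegrE ?ler0n ?mulr_ge0 ?ler0n ?(ltW D0) //.
    apply: hs => //; rewrite /D lerD2r lerDl ltW //.
  apply: lerXn2r; rewrite ?nnegrE ?ler0n ?mulr_ge0 ?ler0n ?(ltW D0) //.
  apply: hs => //; rewrite /D lerD2r lerDr ltW //.
apply: (le_trans step1).
have eN0 : 0 <= e * N%:R by apply: mulr_ge0; [exact: ltW | exact: ler0n].
apply: le_trans (expR_ge1Dxn A eN0).
apply: le_trans (_ : (e * N%:R) ^+ A.+1 / F <= _); last by rewrite lerDr.
rewrite ler_pdivlMr //.
have hh : D ^+ A * F <= e ^+ A.+1 * N%:R.
  have := NB; rewrite /B ler_pdivrMr; last exact: exprn_gt0.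
  by rewrite [e ^+ _ * _]mulrC.
have NA : 0 <= (N%:R : R) ^+ A by rewrite exprn_ge0.
apply: le_trans (_ : e ^+ A.+1 * N%:R * N%:R ^+ A <= _).
  have -> : (D * N%:R) ^+ A * F = D ^+ A * F * N%:R ^+ A by rewrite exprMn; ring.
  exact: ler_wpM2r.
by rewrite le_eqVlt; apply/orP; left; apply/eqP; rewrite exprMn exprS [N%:R ^+ A.+1]exprS; ring.
Qed.

Lemma key r e : (r%:E <= Ef K ml Ps Qs al be)%E -> 0 < e ->
  ((r - e)%:E <= limn_einf (err_exponent (mismatch phi ml Ps Qs)))%E.
Proof.
move=> hr e0.
have [N0 hN0] := CN_exp e0.
pose N1 := maxn 1 N0.
have bnd n : (N1 <= n)%N -> ((r - e)%:E <= err_exponent (mismatch phi ml Ps Qs) n)%E.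
  move=> hn.
  have n0 : (0 < n)%N by apply: leq_trans hn; rewrite leq_maxl.
  have nN0 : (N0 <= n)%N by apply: leq_trans hn; rewrite leq_maxr.
  rewrite /err_exponent; case: ifP => [_|/negbT bn0]; first exact: leey.
  have bpos : 0 < mismatch phi ml Ps Qs n by rewrite lt0r bn0 mismatch_ge0.
  have hb : mismatch phi ml Ps Qs n <= expR (- (n%:R * (r - e))).
    apply: le_trans (beta_bound n0 hr) _.
    apply: le_trans (_ : expR (- (n%:R * r)) * expR (e * n%:R) <= _).
      by apply: ler_wpM2l; [exact: expR_ge0| exact: hN0].
    by rewrite -expRD le_eqVlt; apply/orP; left; apply/eqP; congr expR; ring.
  have hl : ln (mismatch phi ml Ps Qs n) <= - (n%:R * (r - e)).
    by rewrite -[X in _ <= X]expRK ler_ln ?posrE ?expR_gt0.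
  rewrite lee_fin ler_pdivlMr ?ltr0n // mulrC; lra.
rewrite limn_einf_lim; apply: lime_ge; first exact: is_cvg_einfs.
apply: filterS (nbhs_infty_ge N1) => n hn /=.
apply: le_ereal_inf_tmp => _ [k /= hk <-]; apply: bnd.
exact: leq_trans hn hk.
Qed.

End Main.

Unset Implicit Arguments.

Theorem theorem2 (R : realType) (X : finType) (M1 M2 K : nat) (al be : R)
  (hM : (M2 <= M1)%N) (hK : (K <= M2)%N) (hK1 : (1 <= K)%N)
  (hal : 0 < al) (hbe : 0 < be)
  (phi : FLtest X M1 M2 al be) (hphi : is_min_S_test K phi)
  (ml : {set 'I_M1 * 'I_M2}) (hml : is_match K ml)
  (Ps : 'I_M1 -> {ffun X -> R}) (Qs : 'I_M2 -> {ffun X -> R})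
  (hP : forall i, is_dist (Ps i)) (hQ : forall j, is_dist (Qs j))
  (hPinj : injective Ps) (hQinj : injective Qs)
  (hH : in_hyp ml Ps Qs) :
  (Ef K ml Ps Qs al be <=
     limn_einf (err_exponent (mismatch phi ml Ps Qs)))%E.
Proof.
have k := key hal hbe hphi hml hP hQ.
set L := limn_einf _.
case hE : (Ef K ml Ps Qs al be) => [e| |]; last exact: leNye.
  apply/lee_subgt0Pr => eps eps0; rewrite -EFinB; apply: k => //.
  by rewrite hE.
have big r : (r%:E <= L)%E.
  have := k (r + 1) 1; rewrite addrK; apply => //; by rewrite hE leey.
case: L big => [l| |] big //.
  by have := big (l + 1)%R; rewrite lee_fin => h; exfalso; lra.
by have := big 0.
Qed.
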